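(* Let $n \in \mathbb{N}$, let $\mathbf{A}_1, \dots, \mathbf{A}_n$ be additive categories and let $\mathbf{B}$ be an additive category with cokernels. Then there is an equivalence of categories \[ \mathrm{Hom}_{\mathrm{lin}}\big( (\mathbf{A}_i)_{i=1}^n, \mathbf{B} \big) \simeq \mathrm{Hom}_{\mathrm{lin}}^{\mathrm{cok}}\big( (\mathcal{A}(\mathbf{A}_i))_{i=1}^n, \mathbf{B} \big). \]
   Context: For an additive category $\mathbf{A}$, its Freyd category $\mathcal{A}(\mathbf{A})$ is defined as follows. Objects are morphisms $\rho_a: r_a \to a$ of $\mathbf{A}$, written $(a \xleftarrow{\rho_a} r_a)$. A morphism $(a \xleftarrow{\rho_a} r_a) \to (b \xleftarrow{\rho_b} r_b)$ is given by a morphism $\alpha: a \to b$ in $\mathbf{A}$ for which there exists $\omega: r_a \to r_b$ with $\alpha \circ \rho_a = \rho_b \circ \omega$; two such $\alpha, \alpha'$ are identified if $\alpha - \alpha' = \rho_b \circ \lambda$ for some $\lambda: a \to r_b$. Composition, identities and the additive structure are inherited from $\mathbf{A}$. $\mathcal{A}(\mathbf{A})$ is additive and has cokernels (the cokernel of the morphism given by $\alpha$ above is $(b \xleftarrow{(\rho_b,\ \alpha)} r_b \oplus a)$). A functor between products of additive categories is multilinear if it is additive in each component. A multilinear functor between categories with cokernels is right exact if for each component $k$, fixing all other components at objects, the resulting functor preserves cokernels (the canonical morphism $\operatorname{cok}F(\dots,\alpha_k,\dots) \to F(\dots,\operatorname{cok}\alpha_k,\dots)$ is an isomorphism). $\mathrm{Hom}_{\mathrm{lin}}((\mathbf{A}_i)_i,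 \mathbf{B})$ denotes the category of multilinear functors $\prod_i \mathbf{A}_i \to \mathbf{B}$ with natural transformations as morphisms, and $\mathrm{Hom}_{\mathrm{lin}}^{\mathrm{cok}}((\mathcal{A}(\mathbf{A}_i))_i, \mathbf{B})$ the category of right exact multilinear functors $\prod_i \mathcal{A}(\mathbf{A}_i) \to \mathbf{B}$ with natural transformations as morphisms. *)

(* Defs.v *)
(* Setoid-enriched categories: hom-sets carry an equivalence relation [heq],
   all equations are up to [heq].  This is needed because the Freyd category
   has hom-sets that are quotients. *)
From mathcomp Require Import ssreflect ssrfun ssrbool eqtype ssrnat fintype.

Set Implicit Arguments.
Unset Strict Implicit.
Unset Printing Implicit Defensive.

Record Cat := {
  ob :> Type;
  hom : ob -> ob -> Type;
  heq : forall a b, hom a b -> hom a b -> Prop;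
  comp : forall a b c, hom b c -> hom a b -> hom a c;
  idm : forall a, hom a a }.

Arguments hom {_} a b.
Arguments heq {_ a b} f g.
Arguments comp {_ a b c} g f.
Arguments idm {_} a.

Record IsCat (C : Cat) : Prop := {
  heq_refl : forall a b (f : @hom C a b), heq f f;
  heq_sym : forall a b (f g : @hom C a b), heq f g -> heq g f;
  heq_trans : forall a b (f g h : @hom C a b), heq f g -> heq g h -> heq f h;
  comp_resp : forall a b c (f f' : @hom C b c) (g g' : hom a b),
      heq f f' -> heq g g' -> heq (comp f g) (comp f' g');
  comp_assoc : forall a b c d (f : @hom C c d) (g : hom b c) (h : hom a b),
      heq (comp f (comp g h)) (comp (comp f g) h);
  comp_idl : forall a b (f : @hom C a b), heq (comp (idm b) f) f;
  comp_idr : forall a b (f : @hom C a b), heq (comp f (idm a)) f }.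

Arguments heq_refl {C} _ {a b} f.
Arguments heq_sym {C} _ {a b f g}.
Arguments heq_trans {C} _ {a b f g h}.
Arguments comp_resp {C} _ {a b c f f' g g'}.
Arguments comp_assoc {C} _ {a b c d} f g h.
Arguments comp_idl {C} _ {a b} f.
Arguments comp_idr {C} _ {a b} f.

Record PreAdd := {
  pcat :> Cat;
  zero : forall a b : pcat, hom a b;
  add : forall a b : pcat, hom a b -> hom a b -> hom a b }.

Arguments zero {_} a b.
Arguments add {_ a b} f g.

Record IsPreadditive (A : PreAdd) : Prop := {
  pa_cat : IsCat A;
  add_resp : forall a b (f f' g g' : @hom A a b),
      heq f f' -> heq g g' -> heq (add f g) (add f' g');
  addA : forall a b (f g h : @hom A a b), heq (add f (add g h)) (add (add f g) h);
  addC : forall a b (f g : @hom A a b), heq (add f g) (add g f);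
  add0l : forall a b (f : @hom A a b), heq (add (zero a b) f) f;
  addN : forall a b (f : @hom A a b), exists g, heq (add f g) (zero a b);
  comp_addl : forall a b c (f g : @hom A b c) (h : hom a b),
      heq (comp (add f g) h) (add (comp f h) (comp g h));
  comp_addr : forall a b c (h : @hom A b c) (f g : hom a b),
      heq (comp h (add f g)) (add (comp h f) (comp h g)) }.

Arguments add_resp {A} _ {a b f f' g g'}.
Arguments addA {A} _ {a b} f g h.
Arguments addC {A} _ {a b} f g.
Arguments add0l {A} _ {a b} f.
Arguments addN {A} _ {a b} f.
Arguments comp_addl {A} _ {a b c} f g h.
Arguments comp_addr {A} _ {a b c} h f g.

Record IsAdditive (A : PreAdd) : Prop := {
  ad_pre : IsPreadditive A;
  ad_zero : exists z : A,
      (forall a (f g : hom a z), heq f g) /\ (forall a (f g : hom z a), heq f g);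
  ad_biprod : forall a b : A, exists (c : A) (p1 : hom c a) (p2 : hom c b)
      (i1 : hom a c) (i2 : hom b c),
      [/\ heq (comp p1 i1) (idm a), heq (comp p2 i2) (idm b),
          heq (comp p1 i2) (zero b a), heq (comp p2 i1) (zero a b)
        & heq (add (comp i1 p1) (comp i2 p2)) (idm c)] }.

Definition IsCokernel (C : PreAdd) (a b c : C) (f : hom a b) (p : hom b c) : Prop :=
  heq (comp p f) (zero a c) /\
  forall (d : C) (g : hom b d), heq (comp g f) (zero a d) ->
    (exists h : hom c d, heq (comp h p) g) /\
    (forall h h' : hom c d, heq (comp h p) g -> heq (comp h' p) g -> heq h h').

Definition HasCokernels (C : PreAdd) : Prop :=
  forall (a b : C) (f : hom a b), exists (c : C) (p : hom b c), IsCokernel f p.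

Section Freyd.
Variables (A : PreAdd) (HA : IsPreadditive A).

Let hrefl {a b : A} (f : hom a b) := heq_refl (pa_cat HA) f.
Let hsym {a b : A} {f g : hom a b} := @heq_sym _ (pa_cat HA) a b f g.
Let htrans {a b : A} {f g h : hom a b} := @heq_trans _ (pa_cat HA) a b f g h.
Let cresp {a b c : A} {f f' : hom b c} {g g' : hom a b} :=
  @comp_resp _ (pa_cat HA) a b c f f' g g'.
Let cassoc {a b c d : A} (f : hom c d) (g : hom b c) (h : hom a b) :=
  comp_assoc (pa_cat HA) f g h.

Lemma pa_comp_zero_l {a b c : A} (f : hom a b) : heq (comp (zero b c) f) (zero a c).
Proof.
set x := comp (zero b c) f.
have hx : heq x (add x x).
  apply: (htrans _ (comp_addl HA _ _ _)).
  exact: (cresp (hsym (add0l HA _)) (hrefl f)).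
have [g hg] := addN HA x.
apply: hsym; apply: (htrans (hsym hg)).
apply: (htrans (add_resp HA hx (hrefl g)) _).
apply: (htrans (hsym (addA HA _ _ _)) _).
apply: (htrans (add_resp HA (hrefl x) hg) _).
apply: (htrans (addC HA _ _) _); exact: (add0l HA _).
Qed.

Lemma pa_comp_zero_r {a b c : A} (f : hom b c) : heq (comp f (zero a b)) (zero a c).
Proof.
set x := comp f (zero a b).
have hx : heq x (add x x).
  apply: (htrans _ (comp_addr HA _ _ _)).
  exact: (cresp (hrefl f) (hsym (add0l HA _))).
have [g hg] := addN HA x.
apply: hsym; apply: (htrans (hsym hg)).
apply: (htrans (add_resp HA hx (hrefl g)) _).
apply: (htrans (hsym (addA HA _ _ _)) _).
apply: (htrans (add_resp HA (hrefl x) hg) _).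
apply: (htrans (addC HA _ _) _); exact: (add0l HA _).
Qed.

Definition FObj := { a : A & { r : A & hom r a } }.
Definition Fa (X : FObj) : A := projT1 X.
Definition Fr (X : FObj) : A := projT1 (projT2 X).
Definition Frho (X : FObj) : hom (Fr X) (Fa X) := projT2 (projT2 X).

Definition FHom (X Y : FObj) :=
  { f : hom (Fa X) (Fa Y) | exists w : hom (Fr X) (Fr Y),
      heq (comp f (Frho X)) (comp (Frho Y) w) }.

(* alpha ~ alpha' iff alpha - alpha' = rho_b lambda,
   written (without negation) as alpha = alpha' + rho_b lambda *)
Definition FHeq (X Y : FObj) (f g : FHom X Y) : Prop :=
  exists l : hom (Fa X) (Fr Y),
    heq (proj1_sig f) (add (proj1_sig g) (comp (Frho Y) l)).

Lemma Fcomp_ok (X Y Z : FObj) (g : FHom Y Z) (f : FHom X Y) :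
  exists w : hom (Fr X) (Fr Z),
    heq (comp (comp (proj1_sig g) (proj1_sig f)) (Frho X)) (comp (Frho Z) w).
Proof.
case: f => f [w1 h1]; case: g => g [w2 h2] /=.
exists (comp w2 w1).
apply: (htrans (hsym (cassoc _ _ _)) _).
apply: (htrans (cresp (hrefl g) h1) _).
apply: (htrans (cassoc _ _ _) _).
apply: (htrans (cresp h2 (hrefl w1)) _).
exact: (hsym (cassoc _ _ _)).
Qed.

Lemma Fid_ok (X : FObj) :
  exists w : hom (Fr X) (Fr X), heq (comp (idm (Fa X)) (Frho X)) (comp (Frho X) w).
Proof.
exists (idm _).
apply: (htrans (comp_idl (pa_cat HA) _) _).
exact: (hsym (comp_idr (pa_cat HA) _)).
Qed.

Lemma Fzero_ok (X Y : FObj) :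
  exists w : hom (Fr X) (Fr Y),
    heq (comp (zero (Fa X) (Fa Y)) (Frho X)) (comp (Frho Y) w).
Proof.
exists (zero _ _).
apply: (htrans (pa_comp_zero_l _) _).
exact: (hsym (pa_comp_zero_r _)).
Qed.

Lemma Fadd_ok (X Y : FObj) (f g : FHom X Y) :
  exists w : hom (Fr X) (Fr Y),
    heq (comp (add (proj1_sig f) (proj1_sig g)) (Frho X)) (comp (Frho Y) w).
Proof.
case: f => f [w1 h1]; case: g => g [w2 h2] /=.
exists (add w1 w2).
apply: (htrans (comp_addl HA _ _ _) _).
apply: (htrans (add_resp HA h1 h2) _).
exact: (hsym (comp_addr HA _ _ _)).
Qed.

Definition FreydCat : Cat := {|
  ob := FObj;
  hom := FHom;
  heq := FHeq;
  comp := fun X Y Z g f => exist _ _ (Fcomp_ok g f);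
  idm := fun X => exist _ _ (Fid_ok X) |}.

Definition Freyd : PreAdd := {|
  pcat := FreydCat;
  zero := fun X Y => exist _ _ (Fzero_ok X Y) : @hom FreydCat X Y;
  add := fun X Y f g => exist _ _ (Fadd_ok f g) : @hom FreydCat X Y |}.

End Freyd.

Definition upd (I : eqType) (T : I -> Type) (x : forall i, T i) (k : I) (y : T k)
  : forall i, T i :=
  fun i => match eq_comparable k i with
           | left e => eq_rect k T y i e
           | right _ => x i end.

Arguments upd {I T} x k y i.

Definition updm (I : eqType) (C : I -> Cat) (x : forall i, ob (C i)) (k : I)
  (a b : C k) (f : hom a b) :
  forall i, hom (upd x k a i) (upd x k b i) :=
  fun i => match eq_comparable k i as d return
             hom (match d with left e => eq_rect k (fun j => ob (C j)) a i e
                             | right _ => x i end)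
                 (match d with left e => eq_rect k (fun j => ob (C j)) b i e
                             | right _ => x i end) with
           | left e => match e as e0 in _ = j return
                         hom (eq_rect k (fun j => ob (C j)) a j e0)
                             (eq_rect k (fun j => ob (C j)) b j e0) with
                       | erefl => f end
           | right _ => idm (x i) end.

Arguments updm {I C} x k {a b} f i.

Section FunCat.
Variables (I : eqType) (C : I -> PreAdd) (B : PreAdd) (HB : IsCat B).

Record MFun := {
  Fob : (forall i, ob (C i)) -> ob B;
  Fmap : forall x y : (forall i, ob (C i)),
      (forall i, hom (x i) (y i)) -> hom (Fob x) (Fob y) }.

Definition IsMFunctor (F : MFun) : Prop :=
  [/\ (forall x y (f g : forall i, hom (x i) (y i)),
         (forall i, heq (f i) (g i)) -> heq (Fmap F f) (Fmap F g)),
      (forall x, heq (Fmap F (fun i => idm (x i))) (idm (Fob F x)))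
    & (forall x y z (f : forall i, hom (x i) (y i)) (g : forall i, hom (y i) (z i)),
         heq (Fmap F (fun i => comp (g i) (f i))) (comp (Fmap F g) (Fmap F f)))].

Definition Multilinear (F : MFun) : Prop :=
  forall (x : forall i, ob (C i)) (k : I) (a b : C k) (f g : hom a b),
    heq (Fmap F (updm x k (add f g)))
        (add (Fmap F (updm x k f)) (Fmap F (updm x k g))).

Definition RightExact (F : MFun) : Prop :=
  forall (x : forall i, ob (C i)) (k : I) (a b c : C k) (f : hom a b) (p : hom b c),
    IsCokernel f p -> IsCokernel (Fmap F (updm x k f)) (Fmap F (updm x k p)).

Definition NT (F G : MFun) :=
  { eta : forall x, hom (Fob F x) (Fob G x) |
    forall x y (f : forall i, hom (x i) (y i)),
      heq (comp (eta y) (Fmap F f)) (comp (Fmap G f) (eta x)) }.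

Lemma NTcomp_ok (F G H : MFun) (t : NT G H) (s : NT F G) :
  forall x y (f : forall i, hom (x i) (y i)),
    heq (comp (comp (proj1_sig t y) (proj1_sig s y)) (Fmap F f))
        (comp (Fmap H f) (comp (proj1_sig t x) (proj1_sig s x))).
Proof.
case: t => t ht; case: s => s hs /= x y f.
apply: (heq_trans HB (heq_sym HB (comp_assoc HB _ _ _))).
apply: (heq_trans HB (comp_resp HB (heq_refl HB _) (hs _ _ f))).
apply: (heq_trans HB (comp_assoc HB _ _ _)).
apply: (heq_trans HB (comp_resp HB (ht _ _ f) (heq_refl HB _))).
exact: (heq_sym HB (comp_assoc HB _ _ _)).
Qed.

Lemma NTid_ok (F : MFun) :
  forall x y (f : forall i, hom (x i) (y i)),
    heq (comp (idm (Fob F y)) (Fmap F f)) (comp (Fmap F f) (idm (Fob F x))).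
Proof.
move=> x y f; apply: (heq_trans HB (comp_idl HB _)).
exact: (heq_sym HB (comp_idr HB _)).
Qed.

Definition FunCat (P : MFun -> Prop) : Cat := {|
  ob := { F : MFun | P F };
  hom := fun F G => NT (proj1_sig F) (proj1_sig G);
  heq := fun F G s t => forall x, heq (proj1_sig s x) (proj1_sig t x);
  comp := fun F G H t s =>
            exist _ (fun x => comp (proj1_sig t x) (proj1_sig s x)) (NTcomp_ok t s);
  idm := fun F => exist _ (fun x => idm (Fob (proj1_sig F) x)) (NTid_ok (proj1_sig F)) |}.

Definition LinCat : Cat := FunCat (fun F => IsMFunctor F /\ Multilinear F).
Definition LinCokCat : Cat :=
  FunCat (fun F => [/\ IsMFunctor F, Multilinear F & RightExact F]).

End FunCat.

Record Functor (C D : Cat) := {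
  fo : C -> D;
  fm : forall a b : C, hom a b -> hom (fo a) (fo b) }.

Definition IsFunctor (C D : Cat) (F : Functor C D) : Prop :=
  [/\ (forall a b (f g : hom a b), heq f g -> heq (fm F f) (fm F g)),
      (forall a, heq (fm F (idm a)) (idm (fo F a)))
    & (forall a b c (f : hom a b) (g : hom b c),
         heq (fm F (comp g f)) (comp (fm F g) (fm F f)))].

Definition NatIsoId (C D : Cat) (F : Functor C D) (G : Functor D C) : Prop :=
  exists eta : forall a : C, hom (fo G (fo F a)) a,
    (forall a, exists e : hom a (fo G (fo F a)),
        heq (comp (eta a) e) (idm a) /\ heq (comp e (eta a)) (idm _)) /\
    (forall a b (f : hom a b), heq (comp f (eta a)) (comp (eta b) (fm G (fm F f)))).

Definition CatEquiv (C D : Cat) : Prop :=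
  exists (F : Functor C D) (G : Functor D C),
    [/\ IsFunctor F, IsFunctor G, NatIsoId F G & NatIsoId G F].

(* Main.v *)
From Pilot Require Import Defs.
From mathcomp Require Import ssreflect ssrfun ssrbool eqtype ssrnat fintype.
From Stdlib Require Import Setoid Morphisms ProofIrrelevance FunctionalExtensionality IndefiniteDescription.
Import Pilot.Defs.
Set Implicit Arguments. Unset Strict Implicit. Unset Printing Implicit Defensive.

Class CatOK (C : Cat) := catok : IsCat C.
#[global] Instance heq_Equiv (C : Cat) `{CatOK C} (a b : C) : Equivalence (@heq C a b).
Proof. split; [move=> f; exact: (heq_refl catok)|move=> f g; exact: (heq_sym catok)|move=> f g h; exact: (heq_trans catok)]. Qed.
#[global] Instance comp_Proper (C : Cat) `{CatOK C} (a b c : C) :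
  Proper (heq ==> heq ==> heq) (@comp C a b c).
Proof. move=> f f' Hf g g' Hg. exact: (comp_resp catok Hf Hg). Qed.
#[global] Hint Extern 0 (heq _ _) => reflexivity : core.

Class PAOK (A : PreAdd) := paok : IsPreadditive A.
#[global] Instance PAOK_CatOK (A : PreAdd) `{PAOK A} : CatOK (pcat A) := pa_cat paok.
#[global] Instance add_Proper (A : PreAdd) `{PAOK A} (a b : A) :
  Proper (heq ==> heq ==> heq) (@add A a b).
Proof. move=> f f' Hf g g' Hg. exact: (add_resp paok Hf Hg). Qed.

Section CatLemmas.
Context {C : Cat} `{CatOK C}.
Lemma cidl (a b : C) (f : hom a b) : heq (comp (idm b) f) f.
Proof. exact: (comp_idl catok). Qed.
Lemma cidr (a b : C) (f : hom a b) : heq (comp f (idm a)) f.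
Proof. exact: (comp_idr catok). Qed.
Lemma cassoc (a b c d : C) (f : hom c d) (g : hom b c) (h : hom a b) :
  heq (comp f (comp g h)) (comp (comp f g) h).
Proof. exact: (comp_assoc catok). Qed.

Definition idcast (a b : C) (e : a = b) : hom a b :=
  match e in _ = b' return hom a b' with erefl => idm a end.
Lemma idcast_pi (a b : C) (e e' : a = b) : idcast e = idcast e'.
Proof. by rewrite (proof_irrelevance _ e e'). Qed.
Lemma idcast_refl (a : C) (e : a = a) : idcast e = idm a.
Proof. by rewrite (proof_irrelevance _ e erefl). Qed.
Lemma idcast_heq (a : C) (e : a = a) : heq (idcast e) (idm a).
Proof. by rewrite idcast_refl. Qed.
Lemma idcast_comp (a b c : C) (e : a = b) (e' : b = c) :
  heq (comp (idcast e') (idcast e)) (idcast (etrans e e')).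
Proof. case: c / e'; case: b / e => /=; exact: cidl. Qed.
Lemma idcast_inv (a b : C) (e : a = b) : heq (comp (idcast (esym e)) (idcast e)) (idm a).
Proof. case: b / e => /=; exact: cidl. Qed.
Lemma idcast_inv' (a b : C) (e : a = b) : heq (comp (idcast e) (idcast (esym e))) (idm b).
Proof. case: b / e => /=; exact: cidl. Qed.
End CatLemmas.

Section PALemmas.
Context {A : PreAdd} `{PAOK A}.
Lemma paddA (a b : A) (f g h : hom a b) : heq (add f (add g h)) (add (add f g) h).
Proof. exact: (addA paok). Qed.
Lemma paddC (a b : A) (f g : hom a b) : heq (add f g) (add g f).
Proof. exact: (addC paok). Qed.
Lemma padd0l (a b : A) (f : hom a b) : heq (add (zero a b) f) f.
Proof. exact: (add0l paok). Qed.
Lemma padd0r (a b : A) (f : hom a b) : heq (add f (zero a b)) f.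
Proof. rewrite paddC; exact: padd0l. Qed.
Lemma pcompDl (a b c : A) (f g : hom b c) (h : hom a b) :
  heq (comp (add f g) h) (add (comp f h) (comp g h)).
Proof. exact: (comp_addl paok). Qed.
Lemma pcompDr (a b c : A) (h : hom b c) (f g : hom a b) :
  heq (comp h (add f g)) (add (comp h f) (comp h g)).
Proof. exact: (comp_addr paok). Qed.
Lemma pcomp0l (a b c : A) (f : hom a b) : heq (comp (zero b c) f) (zero a c).
Proof. exact: (pa_comp_zero_l paok). Qed.
Lemma pcomp0r (a b c : A) (f : hom b c) : heq (comp f (zero a b)) (zero a c).
Proof. exact: (pa_comp_zero_r paok). Qed.
Lemma pcancel_l (a b : A) (x y z : hom a b) : heq (add x y) (add x z) -> heq y z.
Proof.
move=> E; have [u hu] := addN paok x.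
rewrite -[y]padd0l -[z]padd0l -hu (paddC x u) -!paddA; by rewrite E.
Qed.
Lemma pdouble0 (a b : A) (x : hom a b) : heq x (add x x) -> heq x (zero a b).
Proof. move=> E; apply: (@pcancel_l _ _ x); by rewrite -E padd0r. Qed.
Lemma pneg (a b : A) (x : hom a b) : exists y, heq (add x y) (zero a b).
Proof. exact: (addN paok). Qed.
End PALemmas.

Ltac updk k := rewrite /updm /upd; case: (eq_comparable k k) => [|//];
  let e := fresh "e" in intro e; rewrite (eq_axiomK e) /=.

Section Upd.
Context {I : eqType} {C : I -> Cat} `{HC : forall i, CatOK (C i)}.

Lemma updm_resp (x : forall i, C i) k (a b : C k) (f g : hom a b) :
  heq f g -> forall i, heq (updm x k f i) (updm x k g i).
Proof. move=> E i; rewrite /updm /upd; case: (eq_comparable k i) => [e|ne] //. by case: i / e. Qed.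

Lemma updm_comp (x : forall i, C i) k (a b c : C k) (f : hom a b) (g : hom b c) i :
  heq (comp (updm x k g i) (updm x k f i)) (updm x k (comp g f) i).
Proof. rewrite /updm /upd; case: (eq_comparable k i) => [e|ne] //; last exact: cidl. by case: i / e. Qed.

Lemma updm_id (x : forall i, C i) k (a : C k) i :
  heq (updm x k (idm a) i) (idm _).
Proof. rewrite /updm /upd; case: (eq_comparable k i) => [e|ne] //. by case: i / e. Qed.

Lemma upd_self (x : forall i, C i) k i : x i = upd x k (x k) i.
Proof. rewrite /upd; case: (eq_comparable k i) => [e|//]. by case: i / e. Qed.

End Upd.

Section IsoCok.
Context {B : PreAdd} `{PAOK B}.
Lemma IsCok_iso (a b c a' b' c' : B) (g : hom a b) (q : hom b c) (g' : hom a' b') (q' : hom b' c')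
 (u : hom a' a) (u' : hom a a') (v : hom b' b) (v' : hom b b') (w : hom c c') (w' : hom c' c) :
 heq (comp u u') (idm a) -> heq (comp v' v) (idm b') -> heq (comp v v') (idm b) ->
 heq (comp w' w) (idm c) -> heq (comp w w') (idm c') ->
 heq (comp v g') (comp g u) -> heq q' (comp w (comp q v)) ->
 IsCokernel g q -> IsCokernel g' q'.
Proof.
move=> uu vv1 vv2 ww1 ww2 Hg Hq [Hz Hu]; split.
  by rewrite Hq -!cassoc Hg (cassoc q g u) Hz pcomp0l pcomp0r.
move=> d h hg.
have h0 : heq (comp (comp h v') g) (zero a d).
  have e1 : heq g (comp g (comp u u')) by rewrite uu cidr.
  rewrite e1 -!cassoc (cassoc g u) -Hg -!cassoc (cassoc v' v) vv1 cidl.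
  by rewrite (cassoc h g') hg pcomp0l.
have [[t Ht] Hun] := Hu d _ h0; split.
  exists (comp t w'); rewrite Hq -!cassoc (cassoc w' w) ww1 cidl.
  by rewrite (cassoc t q) Ht -cassoc vv1 cidr.
move=> t1 t2 H1 H2.
have K : forall t0, heq (comp t0 q') h -> heq (comp (comp t0 w) q) (comp h v').
  move=> t0 Ht1; rewrite -Ht1 Hq -!cassoc vv2 cidr. done.
have := Hun _ _ (K _ H1) (K _ H2) => E.
by rewrite -[t1]cidr -ww2 cassoc E -cassoc ww2 cidr.
Qed.
End IsoCok.

Section MF.
Context {I : eqType} {C : I -> PreAdd} `{HC : forall i, CatOK (C i)} {B : PreAdd} `{HB : PAOK B}.
Variable F : MFun C B.
Hypothesis HF : IsMFunctor F.

Lemma Fresp (x y : forall i, C i) (f g : forall i, hom (x i) (y i)) :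
  (forall i, heq (f i) (g i)) -> heq (Fmap F f) (Fmap F g).
Proof. by case: HF => h _ _; apply: h. Qed.
Lemma Fid (x : forall i, C i) (f : forall i, hom (x i) (x i)) :
  (forall i, heq (f i) (idm (x i))) -> heq (Fmap F f) (idm _).
Proof. move=> E; case: HF => _ h _; rewrite -h; exact: Fresp. Qed.
Lemma Fcomp (x y z : forall i, C i) (f : forall i, hom (x i) (y i)) (g : forall i, hom (y i) (z i))
  (h : forall i, hom (x i) (z i)) :
  (forall i, heq (h i) (comp (g i) (f i))) -> heq (Fmap F h) (comp (Fmap F g) (Fmap F f)).
Proof. move=> E; case: HF => _ _ hh; rewrite -hh; exact: Fresp. Qed.

Definition castfam (x y : forall i, C i) (e : forall i, x i = y i) : forall i, hom (x i) (y i) :=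
  fun i => idcast (e i).

Lemma Fcast_inv (x y : forall i, C i) (e : forall i, x i = y i) :
  heq (comp (Fmap F (castfam (fun i => esym (e i)))) (Fmap F (castfam e))) (idm _).
Proof. rewrite -(Fcomp (h := fun i => idm (x i))); first exact: Fid. move=> i; by rewrite idcast_inv. Qed.
Lemma Fcast_inv' (x y : forall i, C i) (e : forall i, x i = y i) :
  heq (comp (Fmap F (castfam e)) (Fmap F (castfam (fun i => esym (e i))))) (idm _).
Proof. rewrite -(Fcomp (h := fun i => idm (y i))); first exact: Fid. move=> i; by rewrite idcast_inv'. Qed.

Lemma Fsq (x x' y y' : forall i, C i) (ex : forall i, x i = x' i) (ey : forall i, y i = y' i)
  (m : forall i, hom (x i) (y i)) (m' : forall i, hom (x' i) (y' i)) :
  (forall i, heq (comp (idcast (ey i)) (m i)) (comp (m' i) (idcast (ex i)))) ->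
  heq (comp (Fmap F (castfam ey)) (Fmap F m)) (comp (Fmap F m') (Fmap F (castfam ex))).
Proof. move=> E; rewrite -(Fcomp (h := fun i => comp (idcast (ey i)) (m i))) //.
by rewrite -(Fcomp (h := fun i => comp (m' i) (idcast (ex i)))) //; apply: Fresp. Qed.

Definition updback (x y : forall i, C i) k (h : forall i, hom (x i) (y i)) :
  forall i, hom (upd x k (y k) i) (y i) := fun i =>
  match eq_comparable k i as d return
    hom (match d with left e => eq_rect k (fun j => ob (C j)) (y k) i e | right _ => x i end) (y i) with
  | left e => match e as e0 in _ = i' return hom (eq_rect k (fun j => ob (C j)) (y k) i' e0) (y i') with
              | erefl => idm (y k) end
  | right _ => h i end.

Lemma fact_upd (x y : forall i, C i) k (h u : forall i, hom (x i) (y i)) :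
  (forall i, k != i -> heq (u i) (h i)) ->
  forall i, heq (u i) (comp (updback k h i) (comp (updm x k (u k) i) (idcast (upd_self x k i)))).
Proof.
move=> Hu i; move: (upd_self x k i); rewrite /updback /updm /upd.
case: (eq_comparable k i) => [e|ne] c.
  move: c; case: i / e => c /=; by rewrite idcast_refl cidl cidr.
rewrite idcast_refl cidl cidr; apply: Hu; exact/eqP.
Qed.

Hypothesis HML : Multilinear F.

Lemma GML (x y : forall i, C i) (f g h : forall i, hom (x i) (y i)) k :
  heq (h k) (add (f k) (g k)) -> (forall i, k != i -> heq (f i) (h i)) ->
  (forall i, k != i -> heq (g i) (h i)) ->
  heq (Fmap F h) (add (Fmap F f) (Fmap F g)).
Proof.
move=> Hk Hf Hg.
set c := fun i => idcast (upd_self x k i).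
have D : forall u : forall i, hom (x i) (y i), (forall i, k != i -> heq (u i) (h i)) ->
    heq (Fmap F u) (comp (Fmap F (updback k h)) (comp (Fmap F (updm x k (u k))) (Fmap F c))).
  move=> u Hu.
  rewrite -(Fcomp (f := c) (g := updm x k (u k)) (h := fun i => comp (updm x k (u k) i) (c i))) //.
  rewrite -(Fcomp (g := updback k h) (h := fun i => comp (updback k h i) (comp (updm x k (u k) i) (c i)))) //.
  apply: Fresp; exact: fact_upd.
rewrite (D h) // (D f) // (D g) // -pcompDr -pcompDl.
apply: comp_Proper => //; apply: comp_Proper => //.
rewrite -HML; apply: Fresp; exact: updm_resp.
Qed.

Lemma GML0 (x y : forall i, C i) (h : forall i, hom (x i) (y i)) k :
  heq (h k) (add (h k) (h k)) -> heq (Fmap F h) (zero _ _).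
Proof. move=> E; apply: pdouble0; exact: (GML (k := k)). Qed.
Hypothesis HRE : RightExact F.

Lemma GRE (x y z : forall i, C i) (f : forall i, hom (x i) (y i)) (p : forall i, hom (y i) (z i)) k :
  IsCokernel (f k) (p k) ->
  (forall i, k != i -> exists e : x i = y i, heq (f i) (idcast e)) ->
  (forall i, k != i -> exists e : y i = z i, heq (p i) (idcast e)) ->
  IsCokernel (Fmap F f) (Fmap F p).
Proof.
move=> Hc Hf Hp.
have ex := upd_self x k.
have ey : forall i, y i = upd x k (y k) i.
  move=> i; rewrite /upd; case: (eq_comparable k i) => [e|ne]; first by case: i / e.
  have [e _] := Hf i (introN eqP ne); exact: esym e.
have ez : forall i, z i = upd x k (z k) i.
  move=> i; rewrite /upd; case: (eq_comparable k i) => [e|ne]; first by case: i / e.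
  have [e _] := Hf i (introN eqP ne); have [e' _] := Hp i (introN eqP ne).
  exact: esym (etrans e e').
have Sf := @Fsq _ _ _ _ ex ey f (updm x k (f k)).
have Sp := @Fsq _ _ _ _ ey ez p (updm x k (p k)).
have HR : IsCokernel (Fmap F (updm x k (f k))) (Fmap F (updm x k (p k))) by apply: HRE.
apply: (IsCok_iso (u := Fmap F (castfam ex)) (u' := Fmap F (castfam (fun i => esym (ex i))))
   (v := Fmap F (castfam ey)) (v' := Fmap F (castfam (fun i => esym (ey i))))
   (w := Fmap F (castfam (fun i => esym (ez i)))) (w' := Fmap F (castfam ez)) _ _ _ _ _ _ _ HR).
all: try exact: Fcast_inv'.
all: try exact: Fcast_inv.
all: try exact: (Fcast_inv' (fun i => esym (ez i))).
all: try exact: (Fcast_inv (fun i => esym (ez i))).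
- apply: Sf => i; move: (ex i) (ey i); rewrite /updm /upd.
  case: (eq_comparable k i) => [e|ne] c1 c2.
    move: c1 c2; case: i / e => c1 c2 /=; by rewrite !idcast_refl cidl cidr.
  have [e' He'] := Hf i (introN eqP ne); rewrite He' idcast_comp cidl.
  by rewrite (idcast_pi (etrans e' c2) c1).
- have Sp' : heq (comp (Fmap F (castfam ez)) (Fmap F p))
      (comp (Fmap F (updm x k (p k))) (Fmap F (castfam ey))).
    apply: Sp => i; move: (ey i) (ez i); rewrite /updm /upd.
    case: (eq_comparable k i) => [e|ne] c1 c2.
      move: c1 c2; case: i / e => c1 c2 /=; by rewrite !idcast_refl cidl cidr.
    have [e' He'] := Hp i (introN eqP ne); rewrite He' idcast_comp cidl.
    by rewrite (idcast_pi (etrans e' c2) c1).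
  rewrite -Sp' cassoc (Fcast_inv ez) cidl. done.
Qed.

End MF.

Section JC.
Context {B : PreAdd} `{HB : PAOK B}.

Definition Epi (a b : B) (e : hom a b) :=
  forall d (h h' : hom b d), heq (comp h e) (comp h' e) -> heq h h'.

Definition JCok (J : Type) (P : J -> bool) (S : J -> B) (Y Z : B) (f : forall j, hom (S j) Y)
  (p : hom Y Z) : Prop :=
  (forall j, P j -> heq (comp p (f j)) (zero _ _)) /\
  forall d (g : hom Y d), (forall j, P j -> heq (comp g (f j)) (zero _ _)) ->
    (exists h, heq (comp h p) g) /\
    (forall h h', heq (comp h p) g -> heq (comp h' p) g -> heq h h').

Variables (J : Type) (S : J -> B) (Y : B) (f : forall j, hom (S j) Y).

Lemma JCok_epi P Z (p : hom Y Z) : JCok P f p -> Epi p.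
Proof.
move=> [Hz Hu] d h h' E.
have K : forall j, P j -> heq (comp (comp h p) (f j)) (zero _ _).
  by move=> j Pj; rewrite -cassoc (Hz j Pj) pcomp0r.
have [_ U] := Hu d _ K; apply: U => //; by rewrite E.
Qed.

Lemma JCok_fact P Z (p : hom Y Z) d (g : hom Y d) : JCok P f p ->
  (forall j, P j -> heq (comp g (f j)) (zero _ _)) -> exists h, heq (comp h p) g.
Proof. by move=> [_ Hu] K; case: (Hu d g K). Qed.

Lemma JCok_kill P Z (p : hom Y Z) j : JCok P f p -> P j -> heq (comp p (f j)) (zero _ _).
Proof. by move=> [Hz _]; apply: Hz. Qed.

Lemma JCok_empty P Z (p : hom Y Z) (q : hom Z Y) : (forall j, ~~ P j) ->
  heq (comp q p) (idm Y) -> heq (comp p q) (idm Z) -> JCok P f p.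
Proof.
move=> NP E1 E2; split=> [j|d g _]; first by rewrite (negbTE (NP j)).
split; first by exists (comp g q); rewrite -cassoc E1 cidr.
move=> h h' H1 H2; by rewrite -[h]cidr -E2 cassoc H1 -H2 -cassoc E2 cidr.
Qed.

Lemma JCok_ext P Q Z (p : hom Y Z) : (forall j, P j = Q j) -> JCok P f p -> JCok Q f p.
Proof.
move=> E [Hz Hu]; split=> [j|d g K]; first by rewrite -E; apply: Hz.
by apply: Hu => j; rewrite E; apply: K.
Qed.

Lemma JCok_post P Z Z' (p : hom Y Z) (p' : hom Y Z') (w : hom Z Z') (w' : hom Z' Z) :
  JCok P f p -> heq (comp w' w) (idm Z) -> heq (comp w w') (idm Z') ->
  heq p' (comp w p) -> JCok P f p'.
Proof.
move=> [Hz Hu] E1 E2 Ep; split=> [j Pj|d g K].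
  by rewrite Ep -cassoc (Hz j Pj) pcomp0r.
have [[h Hh] U] := Hu d g K; split.
  by exists (comp h w'); rewrite Ep -cassoc (cassoc w') E1 cidl.
move=> h1 h2 H1 H2.
have : heq (comp h1 w) (comp h2 w).
  apply: U; by rewrite -cassoc -Ep.
move=> E; by rewrite -[h1]cidr -E2 cassoc E -cassoc E2 cidr.
Qed.

Lemma JCok_unique P Z Z' (p : hom Y Z) (p' : hom Y Z') :
  JCok P f p -> JCok P f p' ->
  exists (h : hom Z Z') (h' : hom Z' Z), [/\ heq (comp h p) p', heq (comp h' p') p,
     heq (comp h' h) (idm Z) & heq (comp h h') (idm Z')].
Proof.
move=> J1 J2.
have [h Hh] := JCok_fact J1 (fun j => JCok_kill (j := j) J2).
have [h' Hh'] := JCok_fact J2 (fun j => JCok_kill (j := j) J1).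
exists h, h'; split=> //.
  apply: (JCok_epi J1); by rewrite -cassoc Hh Hh' cidl.
apply: (JCok_epi J2); by rewrite -cassoc Hh' Hh cidl.
Qed.


End JC.

Lemma JCok_step {B : PreAdd} `{HB : PAOK B} (J : eqType) (S : J -> B) (Y : B)
  (f : forall j, hom (S j) Y) (P Q : J -> bool) (j0 : J) Z W T (p : hom Y Z)
  (g : hom T Z) (q : hom Z W) (e : hom (S j0) T) :
  JCok P f p -> IsCokernel g q -> Epi e -> heq (comp g e) (comp p (f j0)) ->
  (forall j, Q j -> P j || (j == j0)) -> (forall j, P j -> Q j) -> Q j0 ->
  JCok Q f (comp q p).
Proof.
move=> J1 [Gz Gu] Ee Ge HQ HP Qj0; split=> [j Qj|d h K].
  case/orP: (HQ j Qj) => [Pj|/eqP ->].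
    by rewrite -cassoc (JCok_kill J1 Pj) pcomp0r.
  by rewrite -cassoc -Ge cassoc Gz pcomp0l.
have [t Ht] := JCok_fact J1 (fun j Pj => K j (HP j Pj)).
have tg : heq (comp t g) (zero _ _).
  apply: Ee; rewrite pcomp0l -cassoc Ge cassoc Ht; exact: K.
have [[s Hs] _] := Gu d t tg; split.
  by exists s; rewrite cassoc Hs.
move=> h1 h2 H1 H2; apply: (Gu d t tg).2.
  apply: (JCok_epi J1); by rewrite -cassoc H1 Ht.
apply: (JCok_epi J1); by rewrite -cassoc H2 Ht.
Qed.

Lemma JCok_exists {B : PreAdd} `{HB : PAOK B} (HBc : HasCokernels B) (n : nat)
  (S : 'I_n -> B) (Y : B) (f : forall j, hom (S j) Y) :
  exists Z (p : hom Y Z), JCok predT f p.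
Proof.
suff H : forall m, m <= n -> exists Z (p : hom Y Z), JCok (fun j : 'I_n => j < m) f p.
  have [Z [p Hp]] := H n (leqnn n); exists Z, p; apply: JCok_ext Hp => j; by rewrite ltn_ord.
elim=> [_|m IH Hm].
  exists Y, (idm Y); apply: JCok_empty; [by []|exact: cidl|exact: cidl].
have [Z [p Hp]] := IH (ltnW Hm).
pose j0 := Ordinal Hm.
have [W [q Hq]] := HBc _ _ (comp p (f j0)).
exists W, (comp q p); apply: (JCok_step (j0 := j0) (e := idm _) Hp Hq).
- by move=> d h h'; rewrite !cidr.
- by rewrite cidr.
- move=> j; rewrite ltnS leq_eqVlt orbC; case/orP=> [->//|/eqP E].
  apply/orP; right; apply/eqP; apply: val_inj; exact: E.
- by move=> j /ltnW.
- by [].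
Qed.

Section FreydOK.
Context {A : PreAdd} (HA : IsPreadditive A).
#[local] Instance HA_PAOK : PAOK A := HA.

Notation FR := (Freyd HA).

Lemma FHeq_of (X Y : FObj A) (f g : @hom FR X Y) : heq (proj1_sig f) (proj1_sig g) -> heq f g.
Proof. move=> E; exists (zero _ _); by rewrite pcomp0r padd0r. Qed.

Lemma FHeqE (X Y : FObj A) (f g : @hom FR X Y) :
  heq f g <-> exists l, heq (proj1_sig f) (add (proj1_sig g) (comp (Frho Y) l)).
Proof. by []. Qed.

Lemma Freyd_IsCat : IsCat FR.
Proof.
split.
- move=> X Y f; exact: FHeq_of.
- move=> X Y f g [l Hl].
  have [l' Hl'] := pneg l; exists l'.
  by rewrite Hl -paddA -pcompDr Hl' pcomp0r padd0r.
- move=> X Y f g h [l1 H1] [l2 H2]; exists (add l2 l1).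
  by rewrite H1 H2 pcompDr paddA.
- move=> X Y Z f f' g g' [l Hl] [m Hm].
  case: f' Hl => f' [w Hw] /= Hl.
  exists (add (comp l (proj1_sig g)) (comp w m)) => /=.
  rewrite Hl Hm pcompDl !pcompDr -!paddA !cassoc Hw.
  apply: add_Proper => //; by rewrite paddC -paddA.
- move=> W X Y Z f g h; apply: FHeq_of => /=; exact: cassoc.
- move=> X Y f; apply: FHeq_of => /=; exact: cidl.
- move=> X Y f; apply: FHeq_of => /=; exact: cidr.
Qed.

#[local] Instance Freyd_CatOK : CatOK FR := Freyd_IsCat.

Lemma Freyd_IsPreadditive : IsPreadditive FR.
Proof.
split.
- exact: Freyd_IsCat.
- move=> X Y f f' g g' [l Hl] [m Hm]; exists (add l m) => /=.
  by rewrite Hl Hm pcompDr -!paddA (paddA (comp _ l)) (paddC (comp _ l)) -!paddA.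
- move=> X Y f g h; apply: FHeq_of => /=; exact: paddA.
- move=> X Y f g; apply: FHeq_of => /=; exact: paddC.
- move=> X Y f; apply: FHeq_of => /=; exact: padd0l.
- move=> X Y [f [w Hw]].
  have [u Hu] := pneg f; have [w' Hw'] := pneg w.
  have ok : exists w0, heq (comp u (Frho X)) (comp (Frho Y) w0).
    have e : heq (comp (Frho Y) (add w w')) (zero _ _) by rewrite Hw' pcomp0r.
    exists w'; rewrite -[comp u _]padd0r -e pcompDr paddA.
    by rewrite -Hw -pcompDl (paddC u f) Hu pcomp0l padd0l.
  exists (exist _ u ok); apply: FHeq_of => /=; exact: Hu.
- move=> X Y Z f g h; apply: FHeq_of => /=; exact: pcompDl.
- move=> X Y Z h f g; apply: FHeq_of => /=; exact: pcompDr.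
Qed.

Definition Eo (a : A) : FObj A := existT _ a (existT (fun r => hom r a) a (zero a a)).
Lemma Em_ok (a b : A) (f : hom a b) :
  exists w : hom (Fr (Eo a)) (Fr (Eo b)), heq (comp f (Frho (Eo a))) (comp (Frho (Eo b)) w).
Proof. exists (zero a b); rewrite /Frho /=; by rewrite pcomp0r pcomp0l. Qed.
Definition Em (a b : A) (f : hom a b) : @hom FR (Eo a) (Eo b) := exist _ f (Em_ok f).

Lemma Em_heq (a b : A) (f g : hom a b) : heq (Em f) (Em g) <-> heq f g.
Proof.
split; last by move=> E; apply: FHeq_of.
by case=> l /= ->; rewrite pcomp0l padd0r.
Qed.

End FreydOK.

#[global] Instance Freyd_PAOK (A : PreAdd) (HA : IsPreadditive A) : PAOK (Freyd HA) :=
  Freyd_IsPreadditive HA.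
#[global] Instance FreydCat_CatOK (A : PreAdd) (HA : IsPreadditive A) : CatOK (FreydCat HA) :=
  Freyd_IsCat HA.

Section FF.
Context {A : PreAdd} (HA : IsAdditive A).
#[local] Instance HA_PAOK' : PAOK A := ad_pre HA.
Notation FR := (Freyd (ad_pre HA)).

Lemma freyd_facts (P Q R : FObj A) (f : @hom FR P Q) (p : @hom FR Q R) :
  IsCokernel f p ->
  (exists l, heq (comp (proj1_sig p) (proj1_sig f)) (comp (Frho R) l)) /\
  exists s : hom (Fa R) (Fa Q),
   [/\ exists mu nu, heq (comp s (proj1_sig p))
                        (add (idm _) (add (comp (Frho Q) mu) (comp (proj1_sig f) nu))),
       exists t1 t2, heq (comp s (Frho R)) (add (comp (Frho Q) t1) (comp (proj1_sig f) t2)) &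
       exists ka, heq (comp (proj1_sig p) s) (add (idm _) (comp (Frho R) ka))].
Proof.
move=> [Hz Hu].
set phi := proj1_sig f; set pi := proj1_sig p.
have [l Hl] := Hz; rewrite /= padd0l in Hl.
split; first by exists l.
have [wp Hwp] := proj2_sig p.
have [c [p1 [p2 [i1 [i2 [e1 e2 e3 e4 e5]]]]]] := ad_biprod HA (Fr Q) (Fa P).
pose rq := add (comp (Frho Q) p1) (comp phi p2).
pose Q' : FObj A := existT (fun a => {r : A & hom r a}) (Fa Q) (existT (fun r => hom r (Fa Q)) c rq).
have qok : exists w : hom (Fr Q) (Fr Q'), heq (comp (idm (Fa Q)) (Frho Q)) (comp (Frho Q') w).
  exists i1; rewrite /Frho /= /rq pcompDl -!cassoc e1 e4 cidr pcomp0r padd0r; exact: cidl.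
pose q : @hom FR Q Q' := exist _ (idm (Fa Q)) qok.
have hq : heq (comp q f) (@zero FR P Q').
  exists i2; rewrite /= padd0l /rq pcompDl -!cassoc e3 e2 cidr pcomp0r padd0l; exact: cidl.
have [[u Hu1] _] := Hu Q' q hq.
have [la Hla] := Hu1; rewrite /= in Hla.
have [w Hw] := proj2_sig u.
exists (proj1_sig u); split.
- exists (comp p1 la), (comp p2 la).
  by rewrite Hla /Frho /= /rq pcompDl -!cassoc.
- exists (comp p1 w), (comp p2 w).
  by rewrite Hw /Frho /= /rq pcompDl -!cassoc.
- have vok : exists w0 : hom (Fr Q') (Fr R), heq (comp pi (Frho Q')) (comp (Frho R) w0).
    exists (add (comp wp p1) (comp l p2)).
    rewrite /Frho /= /rq pcompDr pcompDr !cassoc -/pi Hwp Hl; done.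
  pose v : @hom FR Q' R := exist _ pi vok.
  have H1 : heq (comp (comp v u) p) p.
    exists (add (comp wp (comp p1 la)) (comp l (comp p2 la))) => /=.
    rewrite -cassoc Hla pcompDr cidr; apply: add_Proper => //.
    rewrite /Frho /= /rq pcompDl pcompDr -!cassoc (cassoc pi (Frho Q)) Hwp.
    by rewrite (cassoc pi phi) Hl pcompDr -!cassoc.
  have H2 : heq (comp (@idm FR R) p) p by apply: FHeq_of => /=; exact: cidl.
  have [_ U] := Hu R p Hz.
  have [ka Hka] := U _ _ H1 H2; rewrite /= in Hka.
  by exists ka.
Qed.
End FF.

Notation cid := (@constructive_indefinite_description _ _).

Section Updf.
Context {I : eqType} {C : I -> Cat}.
Definition updf (s t : forall i, C i) (h : forall i, hom (s i) (t i)) k (g : hom (s k) (t k)) :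
  forall i, hom (s i) (t i) := fun i =>
  match eq_comparable k i with
  | left e => match e in _ = i' return hom (s i') (t i') with erefl => g end
  | right _ => h i end.
Arguments updf {s t} h k g i.
Lemma updf_k (s t : forall i, C i) (h : forall i, hom (s i) (t i)) k g : updf h k g k = g.
Proof. rewrite /updf; case: (eq_comparable k k) => [e|//]; by rewrite (eq_axiomK e). Qed.
Lemma updf_ne (s t : forall i, C i) (h : forall i, hom (s i) (t i)) k g i : k != i -> updf h k g i = h i.
Proof. rewrite /updf; case: (eq_comparable k i) => [e|//]; by case: i / e; rewrite eqxx. Qed.
End Updf.
Arguments updf {I C s t} h k g i.

Definition UC (A : PreAdd) : Cat := {| ob := FObj A; hom := fun P Q => hom (Fa P) (Fa Q);
  heq := fun P Q f g => heq f g; comp := fun P Q R g f => comp g f; idm := fun P => idm (Fa P) |}.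
#[global] Instance UC_CatOK (A : PreAdd) `{PAOK A} : CatOK (UC A).
Proof.
split => /=.
- move=> *; reflexivity.
- move=> a b f g; exact: symmetry.
- move=> a b f g h; exact: transitivity.
- move=> a b c f f' g g' E1 E2; by rewrite E1 E2.
- move=> *; exact: cassoc.
- move=> *; exact: cidl.
- move=> *; exact: cidr.
Qed.

Section Ext.
Variables (n : nat) (A : 'I_n -> PreAdd) (HA : forall i, IsAdditive (A i)).
Variables (B : PreAdd) (HBp : IsPreadditive B) (HBc : HasCokernels B).
#[local] Instance PA_A i : PAOK (A i) := ad_pre (HA i).
#[local] Instance PA_B : PAOK B := HBp.
Notation FA i := (Freyd (ad_pre (HA i))).
Variables (F : MFun A B) (HF : IsMFunctor F) (HML : Multilinear F).

Definition aX (X : forall i, FObj (A i)) : forall i, A i := fun i => Fa (X i).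
Definition src j (X : forall i, FObj (A i)) : forall i, A i :=
  fun i => if j == i then Fr (X i) else Fa (X i).
Definition rel j (X : forall i, FObj (A i)) : forall i, hom (src j X i) (aX X i) :=
  fun i => match j == i as b return hom (if b then Fr (X i) else Fa (X i)) (Fa (X i)) with
           | true => Frho (X i) | false => idm _ end.
Definition Rl (X : forall i, FObj (A i)) j := Fmap F (rel j X).

Lemma kill (Y : forall i, FObj (A i)) (s : forall i, A i) (m : forall i, hom (s i) (aX Y i)) j :
  (exists l : hom (s j) (Fr (Y j)), heq (m j) (comp (Frho (Y j)) l)) ->
  exists m' : forall i, hom (s i) (src j Y i), heq (Fmap F m) (comp (Rl Y j) (Fmap F m')).
Proof.
case=> l Hl.
pose lf := updf (t := fun i => Fr (Y i)) (fun i => zero (s i) (Fr (Y i))) j l.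
exists (fun i => match j == i as b return hom (s i) (if b then Fr (Y i) else Fa (Y i)) with
         | true => lf i | false => m i end).
apply: Fcomp => // i; rewrite /rel /src /aX; case: (eqVneq j i) => [e|ne].
  case: i / e; by rewrite /lf updf_k Hl.
by rewrite cidl.
Qed.

Lemma extE X : exists Z (p : hom (Fob F (aX X)) Z), JCok predT (Rl X) p.
Proof. exact: JCok_exists. Qed.
Definition extO X : B := proj1_sig (cid (extE X)).
Definition extp X : hom (Fob F (aX X)) (extO X) := proj1_sig (cid (proj2_sig (cid (extE X)))).
Lemma extJ X : JCok predT (Rl X) (extp X).
Proof. exact: (proj2_sig (cid (proj2_sig (cid (extE X))))). Qed.

Lemma extkill X (s : forall i, A i) (m : forall i, hom (s i) (aX X i)) j :
  (exists l : hom (s j) (Fr (X j)), heq (m j) (comp (Frho (X j)) l)) ->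
  heq (comp (extp X) (Fmap F m)) (zero _ _).
Proof.
move=> /kill [m' ->]; by rewrite cassoc (JCok_kill (j := j) (extJ X)) // pcomp0l.
Qed.

Lemma RESP (Y : forall i, FObj (A i)) (s : forall i, A i) (al be : forall i, hom (s i) (aX Y i)) :
  (forall i, exists l, heq (al i) (add (be i) (comp (Frho (Y i)) l))) ->
  heq (comp (extp Y) (Fmap F al)) (comp (extp Y) (Fmap F be)).
Proof.
move=> H.
pose ga m := fun i : 'I_n => if i < m then be i else al i.
suff S : forall m, m <= n -> heq (comp (extp Y) (Fmap F (ga m))) (comp (extp Y) (Fmap F al)).
  rewrite -(S n (leqnn n)); apply: comp_Proper => //; apply: Fresp => // i.
  by rewrite /ga ltn_ord.
elim=> [_|m IH Hm].
  apply: comp_Proper => //; apply: Fresp => // i; by rewrite /ga ltn0.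
pose k := Ordinal Hm.
have [l Hl] := H k.
have E : heq (Fmap F (ga m)) (add (Fmap F (ga m.+1))
           (Fmap F (updf (ga m) k (comp (Frho (Y k)) l)))).
  apply: (GML HF HML (k := k)) => //.
  - by rewrite updf_k /ga /= ltnSn ltnn.
  - move=> i ne; rewrite /ga ltnS leq_eqVlt.
    have -> : (nat_of_ord i == m) = false.
      apply/negbTE; apply: contra ne => /eqP E; apply/eqP; exact: val_inj.
    by [].
  - by move=> i ne; rewrite updf_ne.
have K : heq (comp (extp Y) (Fmap F (updf (ga m) k (comp (Frho (Y k)) l)))) (zero _ _).
  apply: (extkill (j := k)); exists l; by rewrite updf_k.
by rewrite -IH ?(ltnW Hm) // E pcompDr K padd0r.
Qed.

Lemma extm_ex X Y (al : forall i, @hom (FA i) (X i) (Y i)) :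
  exists h, heq (comp h (extp X)) (comp (extp Y) (Fmap F (fun i => proj1_sig (al i)))).
Proof.
apply: (JCok_fact (extJ X)) => j _.
rewrite -cassoc /Rl -(Fcomp HF (h := fun i => comp (proj1_sig (al i)) (rel j X i))) //.
apply: (extkill (j := j)).
rewrite /rel /src; move: (proj2_sig (al j)) => [w Hw].
rewrite eqxx; by exists w.
Qed.

Definition extm X Y (al : forall i, @hom (FA i) (X i) (Y i)) : hom (extO X) (extO Y) :=
  proj1_sig (cid (extm_ex al)).
Lemma extm_spec X Y (al : forall i, @hom (FA i) (X i) (Y i)) :
  heq (comp (extm al) (extp X)) (comp (extp Y) (Fmap F (fun i => proj1_sig (al i)))).
Proof. exact: (proj2_sig (cid (extm_ex al))). Qed.
Lemma extm_uniq X Y (al : forall i, @hom (FA i) (X i) (Y i)) h :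
  heq (comp h (extp X)) (comp (extp Y) (Fmap F (fun i => proj1_sig (al i)))) -> heq h (extm al).
Proof. move=> E; apply: (JCok_epi (extJ X)); by rewrite E extm_spec. Qed.

Definition Ext : MFun (fun i => FA i) B := @Build_MFun _ (fun i => FA i) B extO extm.

Lemma Ext_functor : IsMFunctor Ext.
Proof.
split => /=.
- move=> X Y al be E; apply: extm_uniq; rewrite extm_spec; apply: RESP => i.
  exact: (E i).
- move=> X; symmetry; apply: extm_uniq; rewrite cidl /=.
  rewrite (Fid HF (f := fun i => idm (aX X i))) // cidr //.
- move=> X Y Z al be; symmetry; apply: extm_uniq.
  rewrite -cassoc extm_spec cassoc extm_spec -cassoc.
  by rewrite -(Fcomp HF (h := fun i => comp (proj1_sig (be i)) (proj1_sig (al i)))).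
Qed.

Lemma Ext_ML : Multilinear Ext.
Proof.
move=> X k a b f g /=; symmetry; apply: extm_uniq.
rewrite pcompDl !extm_spec -pcompDr; apply: comp_Proper => //.
symmetry; apply: (GML HF HML (k := k)) => //.
- rewrite /aX; updk k; done.
- move=> i ne; rewrite /aX /updm /upd; case: (eq_comparable k i) => [e|//].
  by rewrite e eqxx in ne.
- move=> i ne; rewrite /aX /updm /upd; case: (eq_comparable k i) => [e|//].
  by rewrite e eqxx in ne.
Qed.


Notation uU X k s := (@updm _ (fun i => UC (A i)) X k _ _ s).

Lemma ul_updm X k (P Q : FObj (A k)) (f : @hom (FA k) P Q) i :
  heq (proj1_sig (updm X k f i)) (uU X k (proj1_sig f) i).
Proof. rewrite /updm /upd; case: (eq_comparable k i) => [e|ne] //; by case: i / e. Qed.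

Lemma SPLIT0 (Y : forall i, FObj (A i)) (s : forall i, A i) (m base : forall i, hom (s i) (aX Y i)) k :
 (forall i, exists x : hom (s i) (aX Y i),
    (k != i -> heq x (m i) /\ heq (base i) (m i)) /\
    (k = i -> heq (m i) (add (base i) x) /\ exists l, heq x (comp (Frho (Y i)) l))) ->
 heq (comp (extp Y) (Fmap F m)) (comp (extp Y) (Fmap F base)).
Proof.
move=> H.
pose xf := fun i => proj1_sig (cid (H i)).
have Hx : forall i, _ := fun i => proj2_sig (cid (H i)).
have [Hk1 Hk2] := (Hx k).2 erefl.
rewrite (GML HF HML (k := k) (f := base) (g := xf) (h := m)) //.
all: try (by move=> i ne; case: ((Hx i).1 ne)).
have K : heq (comp (extp Y) (Fmap F xf)) (zero _ _) by apply: (extkill (j := k)).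
by rewrite pcompDr K padd0r.
Qed.

Lemma SPLIT (Y Y' : forall i, FObj (A i)) (ft : forall i, hom (aX Y' i) (aX Y i))
  (s : forall i, A i) (m base : forall i, hom (s i) (aX Y i)) k d (g : hom (extO Y) d) :
 heq (comp g (comp (extp Y) (Fmap F ft))) (zero _ _) ->
 (forall i, exists (x : hom (s i) (aX Y i)) (y : hom (s i) (aX Y' i)),
    (k != i -> [/\ heq x (m i), heq (comp (ft i) y) (m i) & heq (base i) (m i)]) /\
    (k = i -> heq (m i) (add (base i) (add x (comp (ft i) y))) /\
              exists l, heq x (comp (Frho (Y i)) l))) ->
 heq (comp g (comp (extp Y) (Fmap F m))) (comp g (comp (extp Y) (Fmap F base))).
Proof.
move=> Hg H.
pose xf := fun i => proj1_sig (cid (H i)).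
pose yf := fun i => proj1_sig (cid (proj2_sig (cid (H i)))).
have Hx : forall i, _ := fun i => proj2_sig (cid (proj2_sig (cid (H i)))).
have [Hk1 Hk2] := (Hx k).2 erefl.
pose w := updf xf k (add (xf k) (comp (ft k) (yf k))).
rewrite (GML HF HML (k := k) (f := base) (g := w) (h := m)); first last.
- by move=> i ne; rewrite /w updf_ne //; case: ((Hx i).1 ne).
- by move=> i ne; case: ((Hx i).1 ne).
- by rewrite /w updf_k.
rewrite (GML HF HML (k := k) (f := xf) (g := fun i => comp (ft i) (yf i)) (h := w)); first last.
- move=> i ne; rewrite /w updf_ne //; case: ((Hx i).1 ne) => [H1 H2 _]; by rewrite H2 -H1.
- by move=> i ne; rewrite /w updf_ne.
- by rewrite /w updf_k.
rewrite (Fcomp HF (h := fun i => comp (ft i) (yf i)) (g := ft) (f := yf)) //.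
have K : heq (comp (extp Y) (Fmap F xf)) (zero _ _) by apply: (extkill (j := k)).
rewrite !pcompDr K pcomp0r padd0l.
have K2 : heq (comp g (comp (extp Y) (comp (Fmap F ft) (Fmap F yf)))) (zero _ _).
  transitivity (comp (comp g (comp (extp Y) (Fmap F ft))) (Fmap F yf)); first by rewrite !cassoc.
  by rewrite Hg pcomp0l.
by rewrite K2 padd0r.
Qed.


Ltac pwcase k i := rewrite /aX /src /rel /updm /upd; case: (eq_comparable k i) => [|];
  [let e := fresh "e" in intro e; case: i / e; rewrite ?eqxx /=
  |let ne := fresh "ne" in intro ne; have /negbTE -> : k != i by apply/eqP].
Ltac pwk k := rewrite /aX /src /rel /updm /upd; case: (eq_comparable k k) => [|//];
  let e := fresh "e" in intro e; rewrite (eq_axiomK e) /= ?eqxx.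

Lemma Ext_RE : RightExact Ext.
Proof.
move=> X k P Q R f p Hc /=.
have [[l Hl] [s [[mu [nu Hs1]] [t1 [t2 Hs2]] [ka Hka]]]] := freyd_facts Hc.
pose ft : forall i, hom (aX (upd X k P) i) (aX (upd X k Q) i) := uU X k (proj1_sig f).
pose pt : forall i, hom (aX (upd X k Q) i) (aX (upd X k R) i) := uU X k (proj1_sig p).
pose st : forall i, hom (aX (upd X k R) i) (aX (upd X k Q) i) := uU X k s.
have Ef : heq (comp (extm (updm X k f)) (extp (upd X k P))) (comp (extp (upd X k Q)) (Fmap F ft)).
  by rewrite extm_spec; apply: comp_Proper => //; apply: Fresp => // i; exact: ul_updm.
have Ep : heq (comp (extm (updm X k p)) (extp (upd X k Q))) (comp (extp (upd X k R)) (Fmap F pt)).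
  by rewrite extm_spec; apply: comp_Proper => //; apply: Fresp => // i; exact: ul_updm.
split.
  apply: (JCok_epi (extJ (upd X k P))).
  rewrite pcomp0l -cassoc Ef cassoc Ep -cassoc -(Fcomp HF (h := fun i => comp (pt i) (ft i))) //.
  apply: (extkill (j := k)).
  rewrite /pt /ft /aX; updk k; by exists l.
move=> d g Hg.
have Hgf : heq (comp g (comp (extp (upd X k Q)) (Fmap F ft))) (zero _ _).
  by rewrite -Ef cassoc Hg pcomp0l.
have Kill : forall j, predT j ->
    heq (comp (comp g (comp (extp (upd X k Q)) (Fmap F st))) (Rl (upd X k R) j)) (zero _ _).
  move=> j _; rewrite /Rl -!cassoc -(Fcomp HF (h := fun i => comp (st i) (rel j (upd X k R) i))) //.
  case: (eqVneq k j) => [ekj|nkj].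
    case: j / ekj.
    rewrite (SPLIT (Y' := upd X k P) (ft := ft) (k := k)
      (base := updf (fun i => comp (st i) (rel k (upd X k R) i)) k (zero _ _)) Hgf).
      rewrite (GML0 HF HML (k := k)) ?pcomp0r //.
      by rewrite updf_k padd0l.
    move=> i; case: (eqVneq k i) => [eki|nki].
      case: i / eki; rewrite updf_k.
      rewrite /st /ft; pwk k.
      exists (comp (Frho Q) t1), t2; split=> // _; split; last by exists t1.
      by rewrite padd0l Hs2.
    rewrite updf_ne //.
    move: nki; rewrite /st /ft; pwcase k i; first by move=> H; discriminate H.
    move=> nki; exists (comp (idm _) (idm _)), (idm _); split=> // E.
  suff K : heq (comp (extp (upd X k Q)) (Fmap F (fun i => comp (st i) (rel j (upd X k R) i)))) (zero _ _).
    by rewrite K pcomp0r.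
  apply: (extkill (j := j)).
  move: nkj; rewrite /st; pwcase k j; first by move=> H; discriminate H.
  move=> nkj.
  rewrite eqxx; exists (idm _); by rewrite cidl cidr.
have [h Hh] := JCok_fact (extJ (upd X k R)) Kill.
split.
  exists h; apply: (JCok_epi (extJ (upd X k Q))).
  rewrite -cassoc Ep cassoc Hh -!cassoc -(Fcomp HF (h := fun i => comp (st i) (pt i))) //.
  rewrite (SPLIT (Y' := upd X k P) (ft := ft) (k := k) (base := fun i => idm _) Hgf).
    by rewrite (Fid HF) // cidr.
  move=> i; case: (eqVneq k i) => [eki|nki].
    case: i / eki; rewrite /st /pt /ft; pwk k.
    exists (comp (Frho Q) mu), nu; split=> // _; split; last by exists mu.
    exact: Hs1.
  move: nki; rewrite /st /pt /ft; pwcase k i; first by move=> H; discriminate H.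
  move=> nki; exists (comp (idm _) (idm _)), (idm _); split.
    by move=> _; split; rewrite ?cidl.
  move=> E; exfalso; match goal with H : k <> _ |- _ => exact: H E end.
move=> h1 h2 H1 H2.
have E : heq (comp h1 (comp (extp (upd X k R)) (Fmap F pt)))
             (comp h2 (comp (extp (upd X k R)) (Fmap F pt))).
  by rewrite -Ep !cassoc H1 H2.
have S : heq (comp (extp (upd X k R)) (Fmap F (fun i => comp (pt i) (st i))))
             (comp (extp (upd X k R)) (Fmap F (fun i => idm _))).
  apply: (SPLIT0 (k := k)) => i; case: (eqVneq k i) => [eki|nki].
    case: i / eki; rewrite /st /pt; pwk k.
    exists (comp (Frho R) ka); split=> // _; split; last by exists ka.
    exact: Hka.
  move: nki; rewrite /st /pt; pwcase k i; first by move=> H; discriminate H.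
  move=> nki; exists (comp (idm _) (idm _)); split.
    by move=> _; split; rewrite ?cidl.
  move=> E1; exfalso; match goal with H : k <> _ |- _ => exact: H E1 end.
have S' : heq (extp (upd X k R)) (comp (extp (upd X k R)) (comp (Fmap F pt) (Fmap F st))).
  by rewrite -(Fcomp HF (h := fun i => comp (pt i) (st i))) // S (Fid HF) ?cidr.
have T : forall h' : hom (extO (upd X k R)) d, heq (comp h' (extp (upd X k R)))
    (comp (comp h' (comp (extp (upd X k R)) (Fmap F pt))) (Fmap F st)).
  move=> h'; transitivity (comp h' (comp (extp (upd X k R)) (comp (Fmap F pt) (Fmap F st)))).
    by rewrite -S'.
  by rewrite !cassoc.
apply: (JCok_epi (extJ (upd X k R))).
by rewrite (T h1) (T h2) E.
Qed.

End Ext.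

Section EpsL.
Context {A : PreAdd} (HA : IsPreadditive A).
#[local] Instance HA_PAOK3 : PAOK A := HA.
Notation FR := (Freyd HA).

Lemma eps_ok (P : FObj A) : exists w : hom (Fr (Eo (Fa P))) (Fr P),
  heq (comp (idm (Fa P)) (Frho (Eo (Fa P)))) (comp (Frho P) w).
Proof. exists (zero _ _); rewrite /Frho /= cidl pcomp0r; done. Qed.
Definition eps (P : FObj A) : @hom FR (Eo (Fa P)) P := exist _ (idm (Fa P)) (eps_ok P).

Lemma eps_cok (P : FObj A) : IsCokernel (C := FR) (Em HA (Frho P)) (eps P).
Proof.
split.
  exists (idm _) => /=; by rewrite cidl cidr padd0l.
move=> D g [l Hl]; rewrite /= padd0l in Hl.
have ok : exists w, heq (comp (proj1_sig g) (Frho P)) (comp (Frho D) w) by exists l.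
pose h : @hom FR P D := exist _ (proj1_sig g) ok.
split.
  exists h; apply: FHeq_of => /=; exact: cidr.
move=> h1 h2 H1 H2.
have E : heq (comp h1 (eps P)) (comp h2 (eps P)) by rewrite H1 H2.
case: E => l' /=; rewrite !cidr => E; by exists l'.
Qed.
End EpsL.

Section Res.
Variables (n : nat) (A : 'I_n -> PreAdd) (HA : forall i, IsAdditive (A i)).
Variables (B : PreAdd) (HBp : IsPreadditive B).
#[local] Instance PA_A2 i : PAOK (A i) := ad_pre (HA i).
#[local] Instance PA_B2 : PAOK B := HBp.
Notation FA i := (Freyd (ad_pre (HA i))).

Definition Res (H : MFun (fun i => FA i) B) : MFun A B :=
  @Build_MFun _ A B (fun x => Fob H (fun i => Eo (x i)))
    (fun x y f => Fmap H (fun i => Em (ad_pre (HA i)) (f i))).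

Variables (H : MFun (fun i => FA i) B) (HH : IsMFunctor H).

Lemma Res_functor : IsMFunctor (Res H).
Proof.
split => /=.
- move=> x y f g E; apply: (Fresp HH) => i; exact/Em_heq.
- move=> x; apply: (Fid HH) => i; exact: FHeq_of.
- move=> x y z f g; apply: (Fcomp HH) => i; exact: FHeq_of.
Qed.

Hypothesis HML : Multilinear H.
Lemma Res_ML : Multilinear (Res H).
Proof.
move=> x k a b f g /=; apply: (GML HH HML (k := k)).
- apply: FHeq_of; updk k; done.
- move=> i ne; rewrite /updm /upd; case: (eq_comparable k i) => [e|//].
  by rewrite e eqxx in ne.
- move=> i ne; rewrite /updm /upd; case: (eq_comparable k i) => [e|//].
  by rewrite e eqxx in ne.
Qed.


Lemma Epi_iso (a b a' b' : B) (e : hom a b) (p : hom a' b') (u : hom a a') (u' : hom a' a)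
  (v : hom b b') (v' : hom b' b) :
  Epi p -> heq (comp v e) (comp p u) -> heq (comp u u') (idm a') -> heq (comp v' v) (idm b) -> Epi e.
Proof.
move=> Ep Ev Eu Evv d h1 h2 E.
have K : forall h : hom b d, heq (comp (comp h v') p) (comp (comp h e) u').
  move=> h; rewrite -[p]cidr -Eu -!cassoc (cassoc p u) -Ev -!cassoc (cassoc v' v) Evv cidl.
  by rewrite !cassoc.
have E2 : heq (comp h1 v') (comp h2 v') by apply: Ep; rewrite !K E.
by rewrite -[h1]cidr -Evv cassoc E2 -cassoc Evv cidr.
Qed.

Hypothesis HRE : RightExact H.

Definition Zm (X : forall i, FObj (A i)) m : forall i, FObj (A i) :=
  fun i => if i < m then X i else Eo (Fa (X i)).
Definition epsm m (X : forall i, FObj (A i)) : forall i, @hom (FA i) (Eo (Fa (X i))) (Zm X m i) :=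
  fun i => match i < m as b return @hom (FA i) (Eo (Fa (X i))) (if b then X i else Eo (Fa (X i))) with
           | true => eps (ad_pre (HA i)) (X i) | false => idm _ end.

Lemma JH0 X : JCok (fun j : 'I_n => j < 0) (Rl (Res H) X) (Fmap H (epsm 0 X)).
Proof.
pose inv0 := fun i : 'I_n => match i < 0 as b return
   @hom (FA i) (if b then X i else Eo (Fa (X i))) (Eo (Fa (X i))) with
   | true => zero _ _ | false => idm _ end.
apply: JCok_empty (Fmap H inv0) _ _ _ => //.
- rewrite -(Fcomp HH (h := fun i => comp (inv0 i) (epsm 0 X i))) //.
  apply: (Fid HH) => i; exact: cidl.
- rewrite -(Fcomp HH (h := fun i => comp (epsm 0 X i) (inv0 i))) //.
  apply: (Fid HH) => i; exact: cidl.
Qed.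


Section Step.
Variables (m : nat) (k : 'I_n) (Hk : nat_of_ord k = m).
Hypothesis IH : forall X, JCok (fun j : 'I_n => j < m) (Rl (Res H) X) (Fmap H (epsm m X)).
Variable X : forall i, FObj (A i).

Let Hkm : (k < m) = false. Proof. by rewrite Hk ltnn. Qed.
Let HkS : (k < m.+1) = true. Proof. by rewrite Hk ltnSn. Qed.

Definition Wf : forall i, FObj (A i) := fun i => if k == i then Eo (Fr (X i)) else Zm X m i.
Definition gam : forall i, @hom (FA i) (Wf i) (Zm X m i) := fun i =>
  match k == i as c return @hom (FA i) (if c then Eo (Fr (X i)) else Zm X m i) (Zm X m i) with
  | true => match i < m as b return @hom (FA i) (Eo (Fr (X i))) (if b then X i else Eo (Fa (X i))) with
            | true => zero _ _ | false => Em (ad_pre (HA i)) (Frho (X i)) end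
  | false => idm _ end.
Definition del : forall i, @hom (FA i) (Zm X m i) (Zm X m.+1 i) := fun i =>
  match i < m as b1 return @hom (FA i) (if b1 then X i else Eo (Fa (X i))) (Zm X m.+1 i) with
  | true => match i < m.+1 as b2 return @hom (FA i) (X i) (if b2 then X i else Eo (Fa (X i))) with
            | true => idm _ | false => zero _ _ end
  | false => match i < m.+1 as b2 return @hom (FA i) (Eo (Fa (X i))) (if b2 then X i else Eo (Fa (X i))) with
            | true => eps (ad_pre (HA i)) (X i) | false => idm _ end end.
Definition Xp : forall i, FObj (A i) := fun i => if k == i then Eo (Fr (X i)) else X i.
Definition epsp : forall i, @hom (FA i) (Eo (src k X i)) (Wf i) := fun i =>
  match k == i as c return @hom (FA i) (Eo (if c then Fr (X i) else Fa (X i)))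
                                    (if c then Eo (Fr (X i)) else Zm X m i) with
  | true => idm _ | false => epsm m X i end.

Lemma step_cok : IsCokernel (Fmap H gam) (Fmap H del).
Proof.
apply: (GRE HH HRE (k := k)).
- rewrite /gam /del /Wf /Zm eqxx Hkm HkS /=; exact: eps_cok.
- move=> i /negbTE ne; rewrite /gam /Wf ne; by exists erefl.
- move=> i ne; have E : (i < m.+1) = (i < m).
    rewrite ltnS leq_eqVlt; case: eqP => //= E; case/negP: ne; apply/eqP.
    by apply: val_inj; rewrite /= Hk E.
  rewrite /del /Zm E; case: (i < m); by exists erefl.
Qed.

Lemma step_ge : heq (comp (Fmap H gam) (Fmap H epsp)) (comp (Fmap H (epsm m X)) (Rl (Res H) X k)).
Proof.
rewrite -(Fcomp HH (h := fun i => comp (gam i) (epsp i))) //.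
rewrite /Rl /= -(Fcomp HH (h := fun i => comp (epsm m X i) (Em (ad_pre (HA i)) (rel k X i)))) //.
apply: (Fresp HH) => i; apply: FHeq_of.
rewrite /gam /epsp /epsm /rel /src /Wf /Zm; case: (eqVneq k i) => [e|ne].
  case: i / e; rewrite Hkm /=; by rewrite cidl cidr.
by rewrite /= cidl cidr.
Qed.

Lemma step_epi : Epi (Fmap H epsp).
Proof.
have eS : forall i, @eq (ob (FA i)) (Eo (src k X i)) (Eo (Fa (Xp i))).
  by move=> i; rewrite /src /Xp; case: (k == i).
have eW : forall i, @eq (ob (FA i)) (Wf i) (Zm Xp m i).
  move=> i; rewrite /Wf /Zm /Xp; case: (eqVneq k i) => [e|ne] //.
  by case: i / e; rewrite Hkm.
have P : forall i, heq (comp (idcast (eW i)) (epsp i)) (comp (epsm m Xp i) (idcast (eS i))).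
  move=> i; move: (eW i) (eS i); rewrite /Wf /Zm /Xp /epsp /epsm /src.
  case: (eqVneq k i) => [e|ne].
    case: i / e; rewrite Hkm => c1 c2; by rewrite !idcast_heq.
  move=> c1 c2; by rewrite !idcast_heq cidl cidr.
have HCi : forall i, CatOK (FA i) by move=> i; exact: _.
have Sq := Fsq (HC := HCi) (HB := PA_B2) HH (ex := eS) (ey := eW) (m := epsp) (m' := epsm m Xp) P.
apply: (Epi_iso (JCok_epi (IH Xp)) Sq); [exact: (Fcast_inv' HH eS) | exact: (Fcast_inv HH eW)].
Qed.

Lemma JHstep : JCok (fun j : 'I_n => j < m.+1) (Rl (Res H) X) (Fmap H (epsm m.+1 X)).
Proof.
apply: (JCok_post (w := idm _) (w' := idm _) (p := comp (Fmap H del) (Fmap H (epsm m X)))).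
- apply: (JCok_step (j0 := k) (IH X) step_cok step_epi step_ge).
  + move=> j; rewrite ltnS leq_eqVlt; case/orP=> [/eqP E|->] //.
    apply/orP; right; apply/eqP; apply: val_inj; by rewrite /= E Hk.
  + by move=> j /ltnW.
  + by rewrite HkS.
- exact: cidl.
- exact: cidl.
- rewrite cidl -(Fcomp HH (h := fun i => comp (del i) (epsm m X i))) //.
  apply: (Fresp HH) => i; rewrite /del /epsm /Zm.
  case E1: (i < m); case E2: (i < m.+1).
  + by rewrite cidl.
  + by rewrite ltnS ltnW ?E1 in E2.
  + by rewrite cidr.
  + by rewrite cidl.
Qed.
End Step.

Lemma JHall m : m <= n -> forall X, JCok (fun j : 'I_n => j < m) (Rl (Res H) X) (Fmap H (epsm m X)).
Proof.
elim: m => [_ X|m IHm Hm X]; first exact: JH0.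
exact: (JHstep (k := Ordinal Hm) erefl (IHm (ltnW Hm))).
Qed.

Definition epsX (X : forall i, FObj (A i)) : forall i, @hom (FA i) (Eo (Fa (X i))) (X i) :=
  fun i => eps (ad_pre (HA i)) (X i).

Lemma JH X : JCok predT (Rl (Res H) X) (Fmap H (epsX X)).
Proof.
have cz : forall i, @eq (ob (FA i)) (Zm X n i) (X i) by move=> i; rewrite /Zm ltn_ord.
apply: (JCok_post (w := Fmap H (castfam cz)) (w' := Fmap H (castfam (fun i => esym (cz i))))).
- apply: JCok_ext (JHall (leqnn n) X) => j; by rewrite ltn_ord.
- exact: (Fcast_inv HH cz).
- exact: (Fcast_inv' HH cz).
- rewrite -(Fcomp HH (h := fun i => comp (idcast (cz i)) (epsm n X i))) //.
  apply: (Fresp HH) => i; move: (cz i); rewrite /Zm /epsm ltn_ord => c.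
  by rewrite idcast_heq cidl.
Qed.

End Res.

Section ExtNT.
Variables (n : nat) (A : 'I_n -> PreAdd) (HA : forall i, IsAdditive (A i)).
Variables (B : PreAdd) (HBp : IsPreadditive B) (HBc : HasCokernels B).
#[local] Instance PA_A3 i : PAOK (A i) := ad_pre (HA i).
#[local] Instance PA_B3 : PAOK B := HBp.
Variables (F F' : MFun A B) (t : NT F F').

Lemma extnt_ex X : exists h, heq (comp h (extp HBp HBc F X)) (comp (extp HBp HBc F' X) (proj1_sig t (aX X))).
Proof.
apply: (JCok_fact (extJ HBp HBc F X)) => j _.
rewrite -cassoc /Rl (proj2_sig t) cassoc.
by rewrite (JCok_kill (j := j) (extJ HBp HBc F' X)) // pcomp0l.
Qed.
Definition extnt X := proj1_sig (cid (extnt_ex X)).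
Lemma extnt_spec X : heq (comp (extnt X) (extp HBp HBc F X)) (comp (extp HBp HBc F' X) (proj1_sig t (aX X))).
Proof. exact: (proj2_sig (cid (extnt_ex X))). Qed.
Lemma extnt_uniq X h : heq (comp h (extp HBp HBc F X)) (comp (extp HBp HBc F' X) (proj1_sig t (aX X))) ->
  heq h (extnt X).
Proof. move=> E; apply: (JCok_epi (extJ HBp HBc F X)); by rewrite E extnt_spec. Qed.
End ExtNT.

Section Main.
Variables (n : nat) (A : 'I_n -> PreAdd) (HA : forall i, IsAdditive (A i)).
Variables (B : PreAdd) (HB : IsAdditive B) (HBc : HasCokernels B).
#[local] Instance PA_A4 i : PAOK (A i) := ad_pre (HA i).
#[local] Instance PA_B4 : PAOK B := ad_pre HB.
Notation HBp := (ad_pre HB).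
Notation FA i := (Freyd (ad_pre (HA i))).
Notation Lin := (LinCat A (pa_cat (ad_pre HB))).
Notation LinCok := (LinCokCat (fun i => FA i) (pa_cat (ad_pre HB))).

Definition PhiO (F : ob Lin) : ob LinCok :=
  let HF := proj1 (proj2_sig F) in let HML := proj2 (proj2_sig F) in
  exist _ (Ext HA HBp HBc HF)
    (And3 (Ext_functor HA HBp HBc HF HML) (Ext_ML HBp HBc HF HML) (Ext_RE HBp HBc HF HML)).

Lemma PhiNT_ok (F F' : ob Lin) (t : hom F F') :
  forall (X Y : forall i, ob (FA i)) (al : forall i, hom (X i) (Y i)),
    heq (comp (extnt HBp HBc t Y) (Fmap (proj1_sig (PhiO F)) al))
        (comp (Fmap (proj1_sig (PhiO F')) al) (extnt HBp HBc t X)).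
Proof.
move=> X Y al /=.
apply: (JCok_epi (extJ HBp HBc (proj1_sig F) X)).
rewrite -!cassoc extm_spec (cassoc (extnt _ _ t Y)) extnt_spec -cassoc (proj2_sig t).
rewrite extnt_spec (cassoc (extm _ _ _ al)) extm_spec -cassoc; done.
Qed.

Definition PhiM (F F' : ob Lin) (t : hom F F') : hom (PhiO F) (PhiO F') :=
  exist _ (fun X => extnt HBp HBc t X) (PhiNT_ok t).

Definition Phi : Functor Lin LinCok := @Build_Functor Lin LinCok PhiO PhiM.

Lemma GamO_ok (H : ob LinCok) : IsMFunctor (Res (proj1_sig H)) /\ Multilinear (Res (proj1_sig H)).
Proof. case: (proj2_sig H) => HH HML _; split; [exact: (Res_functor HBp HH) | exact: (Res_ML HBp HH HML)]. Qed.
Definition GamO (H : ob LinCok) : ob Lin := exist _ (Res (proj1_sig H)) (GamO_ok H).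

Lemma GamNT_ok (H H' : ob LinCok) (t : hom H H') :
  forall (x y : forall i, A i) (f : forall i, hom (x i) (y i)),
    heq (comp (proj1_sig t (fun i => Eo (y i))) (Fmap (proj1_sig (GamO H)) f))
        (comp (Fmap (proj1_sig (GamO H')) f) (proj1_sig t (fun i => Eo (x i)))).
Proof. move=> x y f /=; exact: (proj2_sig t). Qed.
Definition GamM (H H' : ob LinCok) (t : hom H H') : hom (GamO H) (GamO H') :=
  exist _ (fun x => proj1_sig t (fun i => Eo (x i))) (GamNT_ok t).
Definition Gam : Functor LinCok Lin := @Build_Functor LinCok Lin GamO GamM.

Lemma Gam_functor : IsFunctor Gam.
Proof. split => /=; [by move=> a b f g E x; apply: E | by [] | by []]. Qed.

Lemma Phi_functor : IsFunctor Phi.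
Proof.
split => /=.
- move=> F F' t t' E X; apply: extnt_uniq; rewrite extnt_spec; by rewrite (E (aX X)).
- move=> F X /=; symmetry; apply: extnt_uniq; by rewrite cidl cidr.
- move=> F1 F2 F3 t t' X /=; symmetry; apply: extnt_uniq.
  by rewrite -cassoc extnt_spec cassoc extnt_spec -cassoc.
Qed.

Lemma eta1_ex (F : ob Lin) (x : forall i, A i) :
  exists h : hom (extO HBp HBc (proj1_sig F) (fun i => Eo (x i))) (Fob (proj1_sig F) x),
    heq (comp h (extp HBp HBc (proj1_sig F) (fun i => Eo (x i)))) (idm _).
Proof.
case: (proj2_sig F) => HF HML.
apply: (JCok_fact (extJ HBp HBc (proj1_sig F) (fun i => Eo (x i)))) => j _.
rewrite cidl /Rl; apply: (GML0 HF HML (k := j)).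
rewrite /rel /src eqxx /Frho /=; by rewrite padd0l.
Qed.
Definition eta1c (F : ob Lin) x := proj1_sig (cid (eta1_ex F x)).
Lemma eta1_spec (F : ob Lin) x :
  heq (comp (eta1c F x) (extp HBp HBc (proj1_sig F) (fun i => Eo (x i)))) (idm _).
Proof. exact: (proj2_sig (cid (eta1_ex F x))). Qed.

Lemma eta1_ok (F : ob Lin) : forall (x y : forall i, A i) (f : forall i, hom (x i) (y i)),
  heq (comp (eta1c F y) (Fmap (proj1_sig (GamO (PhiO F))) f))
      (comp (Fmap (proj1_sig F) f) (eta1c F x)).
Proof.
move=> x y f /=.
apply: (JCok_epi (extJ HBp HBc (proj1_sig F) (fun i => Eo (x i)))).
rewrite -!cassoc extm_spec (cassoc (eta1c F y)) !eta1_spec cidl cidr; done.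
Qed.
Definition eta1 (F : ob Lin) : hom (fo Gam (fo Phi F)) F := exist _ (eta1c F) (eta1_ok F).

Lemma e1_ok (F : ob Lin) : forall (x y : forall i, A i) (f : forall i, hom (x i) (y i)),
  heq (comp (extp HBp HBc (proj1_sig F) (fun i => Eo (y i))) (Fmap (proj1_sig F) f))
      (comp (Fmap (proj1_sig (GamO (PhiO F))) f) (extp HBp HBc (proj1_sig F) (fun i => Eo (x i)))).
Proof. move=> x y f /=; by rewrite extm_spec. Qed.
Definition e1 (F : ob Lin) : hom F (fo Gam (fo Phi F)) :=
  exist _ (fun x => extp HBp HBc (proj1_sig F) (fun i => Eo (x i))) (e1_ok F).

Lemma iso_PG : NatIsoId Phi Gam.
Proof.
exists eta1; split.
  move=> F; exists (e1 F); split=> x /=; first exact: eta1_spec.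
  apply: (JCok_epi (extJ HBp HBc (proj1_sig F) (fun i => Eo (x i)))).
  by rewrite -cassoc eta1_spec cidr cidl.
move=> F F' t x /=.
apply: (JCok_epi (extJ HBp HBc (proj1_sig F) (fun i => Eo (x i)))).
by rewrite -!cassoc eta1_spec cidr extnt_spec cassoc eta1_spec cidl.
Qed.

Lemma eta2_ex (H : ob LinCok) (X : forall i, ob (FA i)) :
  exists h : hom (extO HBp HBc (Res (proj1_sig H)) X) (Fob (proj1_sig H) X),
    heq (comp h (extp HBp HBc (Res (proj1_sig H)) X)) (Fmap (proj1_sig H) (epsX HA X)).
Proof.
case: (proj2_sig H) => HH HML HRE.
apply: (JCok_fact (extJ HBp HBc (Res (proj1_sig H)) X)) => j _.
exact: (JCok_kill (j := j) (JH HBp HH HRE X)).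
Qed.
Definition eta2c (H : ob LinCok) X := proj1_sig (cid (eta2_ex H X)).
Lemma eta2_spec (H : ob LinCok) X :
  heq (comp (eta2c H X) (extp HBp HBc (Res (proj1_sig H)) X)) (Fmap (proj1_sig H) (epsX HA X)).
Proof. exact: (proj2_sig (cid (eta2_ex H X))). Qed.

Lemma e2_ex (H : ob LinCok) (X : forall i, ob (FA i)) :
  exists h : hom (Fob (proj1_sig H) X) (extO HBp HBc (Res (proj1_sig H)) X),
    heq (comp h (Fmap (proj1_sig H) (epsX HA X))) (extp HBp HBc (Res (proj1_sig H)) X).
Proof.
case: (proj2_sig H) => HH HML HRE.
apply: (JCok_fact (JH HBp HH HRE X)) => j _.
exact: (JCok_kill (j := j) (extJ HBp HBc (Res (proj1_sig H)) X)).
Qed.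
Definition e2c (H : ob LinCok) X := proj1_sig (cid (e2_ex H X)).
Lemma e2_spec (H : ob LinCok) X :
  heq (comp (e2c H X) (Fmap (proj1_sig H) (epsX HA X))) (extp HBp HBc (Res (proj1_sig H)) X).
Proof. exact: (proj2_sig (cid (e2_ex H X))). Qed.

Lemma iso2a (H : ob LinCok) X : heq (comp (eta2c H X) (e2c H X)) (idm _).
Proof.
case: (proj2_sig H) => HH HML HRE.
apply: (JCok_epi (JH HBp HH HRE X)).
by rewrite -cassoc e2_spec eta2_spec cidl.
Qed.
Lemma iso2b (H : ob LinCok) X : heq (comp (e2c H X) (eta2c H X)) (idm _).
Proof.
apply: (JCok_epi (extJ HBp HBc (Res (proj1_sig H)) X)).
by rewrite -cassoc eta2_spec e2_spec cidl.
Qed.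

Lemma eta2_ok (H : ob LinCok) : forall (X Y : forall i, ob (FA i)) (al : forall i, hom (X i) (Y i)),
  heq (comp (eta2c H Y) (Fmap (proj1_sig (PhiO (GamO H))) al))
      (comp (Fmap (proj1_sig H) al) (eta2c H X)).
Proof.
case: (proj2_sig H) => HH HML HRE.
move=> X Y al /=.
apply: (JCok_epi (extJ HBp HBc (Res (proj1_sig H)) X)).
rewrite -!cassoc extm_spec (cassoc (eta2c H Y)) !eta2_spec /=.
rewrite -(Fcomp HH (h := fun i => comp (epsX HA Y i) (Em (ad_pre (HA i)) (proj1_sig (al i))))) //.
rewrite -(Fcomp HH (h := fun i => comp (al i) (epsX HA X i))) //.
apply: (Fresp HH) => i; apply: FHeq_of => /=; by rewrite cidl cidr.
Qed.
Definition eta2 (H : ob LinCok) : hom (fo Phi (fo Gam H)) H := exist _ (eta2c H) (eta2_ok H).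

Lemma e2_ok (H : ob LinCok) : forall (X Y : forall i, ob (FA i)) (al : forall i, hom (X i) (Y i)),
  heq (comp (e2c H Y) (Fmap (proj1_sig H) al))
      (comp (Fmap (proj1_sig (PhiO (GamO H))) al) (e2c H X)).
Proof.
move=> X Y al.
rewrite -[comp (e2c H Y) _]cidr -(iso2a H X) -!cassoc (cassoc (Fmap _ al)).
rewrite -(eta2_ok H al) -!cassoc (cassoc (e2c H Y)) iso2b cidl; done.
Qed.
Definition e2 (H : ob LinCok) : hom H (fo Phi (fo Gam H)) := exist _ (e2c H) (e2_ok H).

Lemma iso_GP : NatIsoId Gam Phi.
Proof.
exists eta2; split.
  move=> H; exists (e2 H); split=> X /=; [exact: iso2a | exact: iso2b].
move=> H H' t X /=.
apply: (JCok_epi (extJ HBp HBc (Res (proj1_sig H)) X)).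
rewrite -!cassoc eta2_spec extnt_spec cassoc eta2_spec /=.
exact: (proj2_sig t _ _ (epsX HA X)).
Qed.

Theorem main_equiv : CatEquiv Lin LinCok.
Proof. exists Phi, Gam; split; [exact: Phi_functor | exact: Gam_functor | exact: iso_PG | exact: iso_GP]. Qed.

End Main.


Theorem theorem2p9 (n : nat) (A : 'I_n -> PreAdd) (HA : forall i, IsAdditive (A i))
  (B : PreAdd) (HB : IsAdditive B) (HBc : HasCokernels B) :
  CatEquiv (LinCat A (pa_cat (ad_pre HB)))
           (LinCokCat (fun i => Freyd (ad_pre (HA i))) (pa_cat (ad_pre HB))).
Proof. exact: (main_equiv HA HB HBc). Qed.
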